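(* Let $\lambda=(\lambda_1,\dots,\lambda_n)\in\mathbb Z^n$ with $\lambda_1>\lambda_2>\cdots>\lambda_n$ (all entries distinct and decreasing). Write the Schur $P$-Laurent polynomial as $P_\lambda=\sum_\mu g_{\mu\lambda}s_\mu$, the sum over generalized partitions $\mu$ of length $n$. Then $g_{0\lambda}=1$ if $\lambda=2\rho$, and $g_{0\lambda}=0$ otherwise, where $2\rho=(n-1,n-3,\dots,-(n-1))$, i.e. $(2\rho)_i=n-2i+1$.
   Context: A generalized partition of length $n$ is $\mu=(\mu_1\ge\cdots\ge\mu_n)\in\mathbb Z^n$; its Schur Laurent polynomial is $s_\mu=\sum_{w\in\mathfrak S_n}w\bigl(x_1^{\mu_1+n-1}x_2^{\mu_2+n-2}\cdots x_n^{\mu_n}\prod_{i<j}(x_i-x_j)^{-1}\bigr)$, where $\mathfrak S_n$ permutes the variables; these form a basis of the symmetric Laurent polynomials in $x_1,\dots,x_n$, and $s_0=1$. For $\lambda\in\mathbb Z^n$ with strictly decreasing entries, $P_\lambda=\sum_{w\in\mathfrak S_n}w\bigl(x_1^{\lambda_1}\cdots x_n^{\lambda_n}\prod_{i<j}\frac{x_i+x_j}{x_i-x_j}\bigr)$. *)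

(* Defs.v *)
(* Laurent polynomials in x_1..x_n are realised inside the
   field of rational functions {fraction {mpoly int[n]}}. *)
From HB Require Import structures.
From mathcomp Require Import all_boot all_order all_algebra all_fingroup.
From mathcomp Require Import mpoly.
Set Implicit Arguments. Unset Strict Implicit. Unset Printing Implicit Defensive.
Import Order.TTheory GRing.Theory Num.Theory.
Local Open Scope ring_scope.

Definition ratfun (n : nat) := {fraction {mpoly int[n]}}.

Definition xvar (n : nat) (i : 'I_n) : ratfun n := tofrac ('X_i : {mpoly int[n]}).

Definition wmono (n : nat) (w : 'S_n) (a : 'I_n -> int) : ratfun n :=
  \prod_(i < n) (xvar (w i)) ^ (a i).

Definition wvandermonde (n : nat) (w : 'S_n) : ratfun n :=
  \prod_(i < n) \prod_(j < n | (i < j)%N) (xvar (w i) - xvar (w j)).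

Definition wplusprod (n : nat) (w : 'S_n) : ratfun n :=
  \prod_(i < n) \prod_(j < n | (i < j)%N) (xvar (w i) + xvar (w j)).

Definition gen_partition (n : nat) (mu : {ffun 'I_n -> int}) : bool :=
  [forall i : 'I_n, forall j : 'I_n, (i <= j)%N ==> (mu j <= mu i)].

Definition strict_decr (n : nat) (la : {ffun 'I_n -> int}) : bool :=
  [forall i : 'I_n, forall j : 'I_n, (i < j)%N ==> (la j < la i)].

(* Schur Laurent polynomial
   s_mu = sum_w w( x_1^{mu_1+n-1} ... x_n^{mu_n} / prod_{i<j}(x_i - x_j) ),
   with 0-based index i: exponent of x_i is mu_i + n - 1 - i. *)
Definition schurL (n : nat) (mu : {ffun 'I_n -> int}) : ratfun n :=
  \sum_(w : 'S_n)
     wmono w (fun i => mu i + (n - 1 - i)%:Z) / wvandermonde w.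

Definition schurP (n : nat) (la : {ffun 'I_n -> int}) : ratfun n :=
  \sum_(w : 'S_n) wmono w (fun i => la i) * (wplusprod w / wvandermonde w).

(* 2 rho = (n-1, n-3, ..., -(n-1)); 0-based: (2rho)_i = n - 2 i - 1 *)
Definition two_rho (n : nat) : {ffun 'I_n -> int} :=
  [ffun i : 'I_n => n%:Z - 2 * (i : nat)%:Z - 1].

Definition zero_part (n : nat) : {ffun 'I_n -> int} := [ffun => 0].

(* Main.v *)
Set Warnings "-notation-overridden,-ambiguous-paths,-notation-incompatible-prefix".
Require Import Defs.
From HB Require Import structures.
From mathcomp Require Import all_boot all_order all_algebra all_fingroup.
From mathcomp Require Import mpoly.
From mathcomp Require Import ring zify.
Import Order.TTheory GRing.Theory Num.Theory.
Local Open Scope ring_scope.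
Set Implicit Arguments. Unset Strict Implicit. Unset Printing Implicit Defensive.

Definition mono n (e : 'I_n -> int) : ratfun n := \prod_(k < n) xvar k ^ e k.
Definition sgn n (s : 'S_n) : int := (-1) ^+ s.
Definition alt n (e : 'I_n -> int) : ratfun n :=
  \sum_(s : 'S_n) (sgn s)%:~R * wmono s e.

Lemma Xmpoly_neq0 n (i : 'I_n) : ('X_i : {mpoly int[n]}) != 0.
Proof.
apply/eqP => H; have := mcoeffXU int i i; rewrite H mcoeff0 eqxx => /eqP.
by rewrite eq_sym oner_eq0.
Qed.

Lemma xvar_neq0 n (i : 'I_n) : xvar i != 0.
Proof. by rewrite /xvar tofrac_eq0 Xmpoly_neq0. Qed.

Lemma xvarB_neq0 n (i j : 'I_n) : i != j -> xvar i - xvar j != 0.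
Proof.
move=> hij; rewrite /xvar -tofracB tofrac_eq0 subr_eq0; apply/eqP => H.
have := mcoeffXU int i i; rewrite H mcoeffXU eqxx eq_sym (negbTE hij) => /eqP.
by rewrite eq_sym oner_eq0.
Qed.

Lemma monoD n (e f : 'I_n -> int) :
  mono (fun k => e k + f k) = mono e * mono f.
Proof.
by rewrite /mono -big_split; apply: eq_bigr => k _; rewrite expfzDr ?xvar_neq0.
Qed.

Lemma wmonoE n (w : 'S_n) (a : 'I_n -> int) :
  wmono w a = mono (fun k => a ((w^-1)%g k)).
Proof.
rewrite /wmono /mono [RHS](reindex_inj (@perm_inj _ w)) /=.
by apply: eq_bigr => i _; rewrite permK.
Qed.

Lemma vdm (R : comPzRingType) n (a : 'I_n -> R) :
  \prod_(i < n) \prod_(j < n | (i < j)%N) (a j - a i) =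
  \sum_(s : 'S_n) (-1) ^+ s * \prod_(i < n) a (s i) ^+ i.
Proof.
have := det_Vandermonde (\row_j a j); rewrite /determinant.
under eq_bigr do under eq_bigr do rewrite !mxE.
move=> ->; apply: eq_bigr => i _; apply: eq_bigr => j _; by rewrite !mxE.
Qed.

Lemma sgnE (R : pzRingType) n (s : 'S_n) : (sgn s)%:~R = (-1) ^+ s :> R.
Proof. by rewrite /sgn; case: (odd_perm s) => //=; rewrite !expr1 rmorphN1. Qed.

Lemma sgnM n (s t : 'S_n) : sgn (s * t)%g = sgn s * sgn t.
Proof. by rewrite /sgn odd_permM signr_addb. Qed.

Lemma sgn_sq (R : pzRingType) n (s : 'S_n) : (sgn s)%:~R * (sgn s)%:~R = 1 :> R.
Proof. by rewrite sgnE -expr2 sqrr_sign. Qed.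

Lemma vdmX n (w : 'S_n) (z : int) :
  \prod_(i < n) \prod_(j < n | (i < j)%N) (xvar (w j) ^ z - xvar (w i) ^ z) =
  (sgn w)%:~R * alt (fun i : 'I_n => z * (i : nat)%:Z).
Proof.
rewrite (vdm (fun k => xvar (w k) ^ z)) /alt mulr_sumr.
rewrite [RHS](reindex_inj (@mulIg _ w)) /=.
apply: eq_bigr => s _.
rewrite sgnM rmorphM /= [(sgn s)%:~R * _]mulrC !mulrA sgn_sq mul1r sgnE.
congr (_ * _); rewrite /wmono; apply: eq_bigr => i _.
by rewrite permM exprnP exprz_exp.
Qed.

Definition cst n : ratfun n := \prod_(i < n) \prod_(j < n | (i < j)%N) (-1).

Lemma flipV n (a : 'I_n -> ratfun n) :
  \prod_(i < n) \prod_(j < n | (i < j)%N) (a i - a j) =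
  cst n * \prod_(i < n) \prod_(j < n | (i < j)%N) (a j - a i).
Proof.
rewrite /cst -big_split; apply: eq_bigr => i _; rewrite -big_split.
by apply: eq_bigr => j _; rewrite /= mulN1r opprB.
Qed.

Lemma cst_sq n : cst n * cst n = 1.
Proof.
rewrite /cst -big_split big1 // => i _; rewrite -big_split big1 // => j _.
by rewrite /= mulN1r opprK.
Qed.

Lemma wvdmE n (w : 'S_n) :
  wvandermonde w = cst n * ((sgn w)%:~R * alt (fun i : 'I_n => 1 * (i : nat)%:Z)).
Proof.
rewrite /wvandermonde flipV -vdmX; congr (_ * _).
Qed.

Lemma wplusE n (w : 'S_n) :
  wplusprod w * wvandermonde w =
  cst n * ((sgn w)%:~R * alt (fun i : 'I_n => 2 * (i : nat)%:Z)).
Proof.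
rewrite /wvandermonde /wplusprod -big_split /=.
rewrite (eq_bigr (fun i : 'I_n => \prod_(j < n | (i < j)%N)
      (xvar (w i) ^+ 2 - xvar (w j) ^+ 2))); last first.
  by move=> i _; rewrite -big_split; apply: eq_bigr => j _; rewrite subr_sqr mulrC.
by rewrite flipV -vdmX.
Qed.

Lemma card_split n (k : 'I_n) :
  (#|[pred j : 'I_n | (k < j)%N]| + #|[pred j : 'I_n | (j < k)%N]| = n.-1)%N.
Proof.
rewrite -!sum1_card !(big_mkcond (fun j => j \in _)) -big_split /=.
have -> : n.-1 = #|predC1 k| by rewrite cardC1 card_ord.
rewrite -sum1_card [RHS]big_mkcond /=.
apply: eq_bigr => j _; rewrite !inE /=.
case: (ltngtP k j) => h.
- by rewrite -(inj_eq val_inj) /= (gtn_eqF h).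
- by rewrite -(inj_eq val_inj) /= (ltn_eqF h).
- have -> : j = k by apply: val_inj.
  by rewrite eqxx.
Qed.

Lemma Pmono n :
  \prod_(i < n) \prod_(j < n | (i < j)%N) (xvar i * xvar j) =
  mono (fun _ : 'I_n => (n.-1)%:Z).
Proof.
under eq_bigr do rewrite big_split /=.
rewrite big_split /=.
rewrite [X in _ * X](exchange_big_dep xpredT) //=.
rewrite -big_split /=; apply: eq_bigr => k _.
rewrite (prodr_const [pred i : 'I_n | (k < i)%N] (xvar k)).
rewrite (prodr_const [pred i : 'I_n | (i < k)%N] (xvar k)).
by rewrite -exprD card_split.
Qed.

Lemma altV n (z : int) :
  alt (fun i : 'I_n => z * (i : nat)%:Z) =
  \prod_(i < n) \prod_(j < n | (i < j)%N) (xvar j ^ z - xvar i ^ z).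
Proof.
have := vdmX (1%g : 'S_n) z; rewrite /sgn odd_perm1 expr0 mul1r => <-.
by apply: eq_bigr => i _; apply: eq_bigr => j _; rewrite !perm1.
Qed.

Lemma pair_id (F : fieldType) (a b : F) : a != 0 -> b != 0 ->
  (b ^ (2 : int) - a ^ (2 : int)) * (b ^ (-1) - a ^ (-1)) =
  ((b ^ (1 : int) - a ^ (1 : int)) * (b ^ (-2) - a ^ (-2))) * (a * b).
Proof.
move=> a0 b0.
have e2 : forall x : F, x ^ (2 : int) = x ^+ 2 by [].
have e2' : forall x : F, x ^ (-2) = (x ^+ 2)^-1.
  by move=> x; rewrite -invr_expz.
rewrite !e2 !e2' !exprN1 !expr1z.
clear e2 e2'; field; by rewrite a0 b0.
Qed.

Lemma key_id n :
  alt (fun i : 'I_n => 2 * (i : nat)%:Z) * alt (fun i : 'I_n => -1 * (i : nat)%:Z) =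
  alt (fun i : 'I_n => 1 * (i : nat)%:Z) * alt (fun i : 'I_n => -2 * (i : nat)%:Z)
  * mono (fun _ : 'I_n => (n.-1)%:Z).
Proof.
rewrite !altV -Pmono -!big_split; apply: eq_bigr => i _.
rewrite -!big_split; apply: eq_bigr => j _ /=.
by rewrite pair_id ?xvar_neq0.
Qed.

Lemma monoK n (f : 'I_n -> int) (K : nat) : (forall k, absz (f k) <= K)%N ->
  mono f * mono (fun _ => K%:Z) =
  tofrac ('X_[[multinom absz ((f k + K%:Z)%R) | k < n]] : {mpoly int[n]}).
Proof.
move=> hK; rewrite -monoD mpolyXE_id rmorph_prod /mono; apply: eq_bigr => k _.
rewrite mnmE rmorphXn /= -/(xvar k).
have h0 : 0 <= f k + K%:Z.
  have := lez_abs (f k); rewrite -subr_ge0 => h.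
  have := hK k; lia.
by rewrite -{1}(gez0_abs h0).
Qed.

Lemma tofracz n (c : int) : (c%:~R : ratfun n) = tofrac (c%:~R : {mpoly int[n]}).
Proof. by rewrite rmorph_int. Qed.

Definition mK n (K : nat) (f : {ffun 'I_n -> int}) : 'X_{1.. n} :=
  [multinom absz ((f k + K%:Z)%R) | k < n].

Lemma mK_eq n K (f g : {ffun 'I_n -> int}) :
  (forall k, absz (f k) <= K)%N -> (forall k, absz (g k) <= K)%N ->
  (mK K f == mK K g) = (f == g).
Proof.
move=> hf hg; apply/eqP/eqP => [|->] //.
move/mnmP => h; apply/ffunP => k; have := h k; rewrite !mnmE.
have := hf k; have := hg k => hg' hf' e.
have e' := congr1 Posz e.
have l1 := lez_abs (f k); have l2 := lez_abs (- f k); rewrite abszN in l2.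
have l3 := lez_abs (g k); have l4 := lez_abs (- g k); rewrite abszN in l4.
have hf2 : (absz (f k))%:Z <= K%:Z by rewrite lez_nat.
have hg2 : (absz (g k))%:Z <= K%:Z by rewrite lez_nat.
move: e'; set a := Posz (absz (f k)); set b := Posz (absz (g k)) => e'.
rewrite !gez0_abs in e'; first by move/addIr: e'.
- have := le_trans l4 hg2. lia.
- have := le_trans l2 hf2; lia.
Qed.

Lemma CE n (I1 I2 : eqType) (J : finType) (r1 : seq I1) (r2 : seq I2)
  (c1 : I1 -> J -> int) (c2 : I2 -> J -> int)
  (e1 : I1 -> J -> {ffun 'I_n -> int}) (e2 : I2 -> J -> {ffun 'I_n -> int})
  (t : {ffun 'I_n -> int}) :
  \sum_(i <- r1) \sum_(j : J) (c1 i j)%:~R * mono (e1 i j) =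
  \sum_(i <- r2) \sum_(j : J) (c2 i j)%:~R * mono (e2 i j) ->
  \sum_(i <- r1) \sum_(j | e1 i j == t) c1 i j =
  \sum_(i <- r2) \sum_(j | e2 i j == t) c2 i j.
Proof.
set K1 := (\max_(i <- r1) \max_(j : J) \max_(k : 'I_n) absz (e1 i j k))%N.
set K2 := (\max_(i <- r2) \max_(j : J) \max_(k : 'I_n) absz (e2 i j k))%N.
set K3 := (\max_(k : 'I_n) absz (t k))%N.
set K := (K1 + K2 + K3)%N.
have b1 : forall i, i \in r1 -> forall j k, (absz (e1 i j k) <= K)%N.
  move=> i hi j k; apply: (leq_trans _ (leq_addr K3 _)); apply: (leq_trans _ (leq_addr K2 _)).
  apply: (leq_trans _ (leq_bigmax_seq _ hi isT)).
  apply: (leq_trans _ (leq_bigmax j)); exact: (leq_bigmax k).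
have b2 : forall i, i \in r2 -> forall j k, (absz (e2 i j k) <= K)%N.
  move=> i hi j k; apply: (leq_trans _ (leq_addr K3 _)); apply: (leq_trans _ (leq_addl K1 _)).
  apply: (leq_trans _ (leq_bigmax_seq _ hi isT)).
  apply: (leq_trans _ (leq_bigmax j)); exact: (leq_bigmax k).
have bt : forall k, (absz (t k) <= K)%N.
  move=> k; apply: (leq_trans _ (leq_addl _ _)); exact: (leq_bigmax k).
move=> /(congr1 (fun x => x * mono (fun _ => K%:Z))).
rewrite !mulr_suml.
rewrite big_seq [in RHS]big_seq.
under eq_bigr => i hi.
  rewrite mulr_suml.
  under eq_bigr => j _ do rewrite -mulrA (monoK (b1 i hi j)) tofracz -rmorphM.
  over.
under [in RHS]eq_bigr => i hi.
  rewrite mulr_suml.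
  under eq_bigr => j _ do rewrite -mulrA (monoK (b2 i hi j)) tofracz -rmorphM.
  over.
under eq_bigr do rewrite -rmorph_sum.
under [in RHS]eq_bigr do rewrite -rmorph_sum.
rewrite -!rmorph_sum => /eqP; rewrite tofrac_eq => /eqP /(congr1 (mcoeff (mK K t))).
rewrite !raddf_sum.
have hb : forall (b : bool) (c : int), (b%:R : int) *~ c = if b then c else 0.
  by move=> [] c; [exact: intz | exact: mul0rz].
under eq_bigr => i hi.
  rewrite raddf_sum.
  under eq_bigr => j _ do rewrite mulrzl raddfMz /= mcoeffX -/(mK K (e1 i j)) hb (mK_eq (b1 i hi j) bt).
  over.
under [in RHS]eq_bigr => i hi.
  rewrite raddf_sum.
  under eq_bigr => j _ do rewrite mulrzl raddfMz /= mcoeffX -/(mK K (e2 i j)) hb (mK_eq (b2 i hi j) bt).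
  over.
rewrite -big_seq -[in RHS]big_seq => h.
under eq_bigr do rewrite big_mkcond.
under [in RHS]eq_bigr do rewrite big_mkcond.
exact: h.
Qed.

Lemma incr_ge n (f : 'S_n) :
  (forall i j : 'I_n, (i < j)%N -> (f i < f j)%N) -> forall i : 'I_n, (i <= f i)%N.
Proof.
move=> hf [i hi]; elim: i hi => [//|i IH] hi /=.
have h1 := IH (ltnW hi).
have h2 := hf (Ordinal (ltnW hi)) (Ordinal hi) (ltnSn i).
exact: leq_ltn_trans h1 h2.
Qed.

Lemma incr_id n (f : 'S_n) :
  (forall i j : 'I_n, (i < j)%N -> (f i < f j)%N) -> forall i : 'I_n, f i = i.
Proof.
move=> hf.
have hfi : forall i j : 'I_n, (i < j)%N -> ((f^-1)%g i < (f^-1)%g j)%N.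
  move=> i j hij; rewrite ltnNge; apply/negP => hle.
  have : (f ((f^-1)%g j) <= f ((f^-1)%g i))%N.
    move: hle; rewrite leq_eqVlt => /orP [/eqP e|/hf h]; last exact: ltnW.
    by have -> : (f^-1)%g j = (f^-1)%g i by apply: val_inj.
  by rewrite !permKV leqNgt hij.
move=> i; apply: val_inj => /=.
have h1 := incr_ge hfi i.
have h2 := incr_ge hf ((f^-1)%g i); rewrite permKV in h2.
have e : (f^-1)%g i = i by apply: val_inj; apply/eqP; rewrite eqn_leq h1 h2.
by rewrite -{1}e permKV.
Qed.

Lemma DI n (a b : 'I_n -> int) (s : 'S_n) :
  (forall i j : 'I_n, (i < j)%N -> a j < a i) ->
  (forall i j : 'I_n, (i < j)%N -> b i < b j) ->
  (forall i, a i = b (s i)) -> forall i, s i = rev_ord i.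
Proof.
move=> ha hb hab.
set f := (s * perm (@rev_ord_inj n))%g.
have hf : forall i j : 'I_n, (i < j)%N -> (f i < f j)%N.
  move=> i j hij; rewrite !permM !permE /=.
  have : (s j < s i)%N.
    rewrite ltnNge; apply/negP; rewrite leq_eqVlt => /orP [/eqP e|h].
      have e' : s i = s j by apply: val_inj.
      by move: (ha _ _ hij); rewrite !hab e' ltxx.
    by move: (ha _ _ hij); rewrite !hab => /lt_trans/(_ (hb _ _ h)); rewrite ltxx.
  have := ltn_ord (s i); have := ltn_ord (s j); lia.
move=> i; have := incr_id hf i; rewrite permM permE => e.
by rewrite -[in RHS]e rev_ordK.
Qed.

Lemma sum_pick (T : eqType) (s : seq T) (x : T) (F : T -> int) :
  uniq s -> \sum_(y <- s) (if y == x then F y else 0) = if x \in s then F x else 0.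
Proof.
elim: s => [|a s IH] /=; first by rewrite big_nil.
move=> /andP [ha hu]; rewrite big_cons IH // inE.
case: (eqVneq a x) => [<-|hax] /=; last by rewrite add0r.
by rewrite (negbTE ha) addr0.
Qed.

Lemma mono_ffun n (F : 'I_n -> int) : mono [ffun k => F k] = mono F.
Proof. by apply: eq_bigr => k _; rewrite ffunE. Qed.

Lemma mono0 n : mono (fun _ : 'I_n => 0) = 1.
Proof. by rewrite /mono big1 // => k _; rewrite expr0z. Qed.

Lemma alt_mul3 n (a b c : 'I_n -> int) :
  alt a * alt b * mono c =
  \sum_(p : 'S_n * 'S_n) ((sgn p.1 * sgn p.2)%:~R *
     mono [ffun k => a ((p.1^-1)%g k) + b ((p.2^-1)%g k) + c k]).
Proof.
rewrite -(pair_bigA _ (fun w v => (sgn w * sgn v)%:~R *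
   mono [ffun k => a ((w^-1)%g k) + b ((v^-1)%g k) + c k])) /=.
rewrite /alt mulr_suml mulr_suml; apply: eq_bigr => w _.
rewrite mulr_sumr mulr_suml; apply: eq_bigr => v _.
rewrite mono_ffun !monoD -!wmonoE rmorphM /=.
by ring.
Qed.

Definition rv n : 'S_n := perm (@rev_ord_inj n).

Lemma rvE n (i : 'I_n) : rv n i = rev_ord i.
Proof. by rewrite permE. Qed.

Lemma sigma_eq n (p : 'S_n * 'S_n) k :
  (p.1 * (p.2^-1))%g = rv n -> (p.2^-1)%g k = rev_ord ((p.1^-1)%g k).
Proof.
move=> hs; have := congr1 (fun s : 'S_n => s ((p.1^-1)%g k)) hs.
by rewrite /= permM permKV rvE.
Qed.

Lemma sdecr n (la : {ffun 'I_n -> int}) : strict_decr la ->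
  forall i j : 'I_n, (i < j)%N -> la j < la i.
Proof. by move=> /forallP h i j hij; have /forallP/(_ j)/implyP := h i; apply. Qed.

Lemma E1char n (la : {ffun 'I_n -> int}) (p : 'S_n * 'S_n) : strict_decr la ->
  ([ffun k => la ((p.1^-1)%g k) + (-2 * ((p.2^-1)%g k : nat)%:Z) + (n.-1)%:Z]
     == [ffun => 0]) = (la == two_rho n) && ((p.1 * (p.2^-1))%g == rv n).
Proof.
move=> /sdecr hla; apply/eqP/andP.
- move=> /ffunP h.
  have hs : forall i, la i = (fun j : 'I_n => 2 * (j : nat)%:Z - (n.-1)%:Z)
                              ((p.1 * (p.2^-1))%g i).
    move=> i; have := h (p.1 i); rewrite !ffunE permK permM /=; lia.
  have hb : forall i j : 'I_n, (i < j)%N ->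
     (fun j : 'I_n => 2 * (j : nat)%:Z - (n.-1)%:Z) i <
     (fun j : 'I_n => 2 * (j : nat)%:Z - (n.-1)%:Z) j.
    move=> i j /= hij; lia.
  have hr := DI hla hb hs.
  split; apply/eqP.
  + apply/ffunP => i; rewrite (hs i) hr !ffunE /=.
    have := ltn_ord i; lia.
  + by apply/permP => i; rewrite hr rvE.
- move=> [/eqP -> /eqP hs]; apply/ffunP => k; rewrite !ffunE (sigma_eq k hs) /=.
  have := ltn_ord ((p.1^-1)%g k); lia.
Qed.

Lemma E2char n (mu : {ffun 'I_n -> int}) (p : 'S_n * 'S_n) : gen_partition mu ->
  ([ffun k => mu ((p.1^-1)%g k) + (n - 1 - (p.1^-1)%g k)%N%:Z
      + (-1 * ((p.2^-1)%g k : nat)%:Z) + 0]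
     == [ffun => 0]) = (mu == zero_part n) && ((p.1 * (p.2^-1))%g == rv n).
Proof.
move=> /forallP hmu.
have hla : forall i j : 'I_n, (i < j)%N ->
    (fun i : 'I_n => mu i + (n - 1 - i)%N%:Z) j < (fun i : 'I_n => mu i + (n - 1 - i)%N%:Z) i.
  move=> i j hij /=; have /forallP/(_ j)/implyP := hmu i.
  move=> /(_ (ltnW hij)) h; have := ltn_ord j; lia.
apply/eqP/andP.
- move=> /ffunP h.
  have hs : forall i, (fun i : 'I_n => mu i + (n - 1 - i)%N%:Z) i =
      (fun j : 'I_n => (j : nat)%:Z) ((p.1 * (p.2^-1))%g i).
    move=> i; have := h (p.1 i); rewrite !ffunE permK permM /=; lia.
  have hb : forall i j : 'I_n, (i < j)%N ->
     (fun j : 'I_n => (j : nat)%:Z) i < (fun j : 'I_n => (j : nat)%:Z) j.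
    by move=> i j /= hij; rewrite ltz_nat.
  have hr := DI hla hb hs.
  split; apply/eqP.
  + apply/ffunP => i; have := hs i; rewrite hr !ffunE /=.
    have := ltn_ord i; lia.
  + by apply/permP => i; rewrite hr rvE.
- move=> [/eqP -> /eqP hs]; apply/ffunP => k; rewrite !ffunE (sigma_eq k hs) /=.
  have := ltn_ord ((p.1^-1)%g k); lia.
Qed.

Lemma Tval n :
  \sum_(p : 'S_n * 'S_n | (p.1 * (p.2^-1))%g == rv n) (sgn p.1 * sgn p.2) =
  sgn (rv n) *+ #|{: 'S_n}|.
Proof.
rewrite -(pair_big_dep xpredT (fun w v => (w * v^-1)%g == rv n)
   (fun w v => sgn w * sgn v)) /=.
rewrite -sumr_const; apply: eq_bigr => w _.
rewrite (eq_bigl (fun v => v == ((rv n)^-1 * w)%g)); last first.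
  move=> v; apply/eqP/eqP => [h|->].
  - by rewrite -h invMg invgK -mulgA mulVg mulg1.
  - by rewrite invMg invgK mulgA mulgV mul1g.
rewrite big_pred1_eq !sgnM mulrCA -sgnM.
have -> : sgn (w * w)%g = 1 by rewrite /sgn odd_permM addbb.
by rewrite mulr1 /sgn odd_permV.
Qed.

Lemma unit_sq (F : fieldType) (u : F) : u * u = 1 -> u != 0.
Proof. by move=> h; apply/eqP => h0; move: h; rewrite h0 mul0r => /eqP; rewrite eq_sym oner_eq0. Qed.

Lemma alg1 (F : fieldType) (P V u s A D : F) : u * u = 1 -> s * s = 1 -> D != 0 ->
  P * V = u * (s * A) -> V = u * (s * D) -> P / V = u * s * A / D ^+ 2.
Proof.
move=> hu hs hD hPV hV.
have hu0 := unit_sq hu; have hs0 := unit_sq hs.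
have hV0 : V != 0 by rewrite hV !mulf_neq0.
have -> : P / V = (P * V) / (V * V) by field; rewrite hV0.
rewrite hPV hV.
have -> : u * (s * D) * (u * (s * D)) = (u * u) * (s * s) * D ^+ 2 by ring.
by rewrite hu hs !mul1r mulrA.
Qed.

Lemma alg2 (F : fieldType) (x u s D : F) : u * u = 1 -> s * s = 1 -> D != 0 ->
  x / (u * (s * D)) = u * s * x / D.
Proof.
move=> hu hs hD; have hu0 := unit_sq hu; have hs0 := unit_sq hs.
have -> : x / (u * (s * D)) = u * s * x / ((u * u) * (s * s) * D).
  by field; rewrite hu0 hs0 hD.
by rewrite hu hs !mul1r.
Qed.

Lemma alg3 (F : fieldType) (X B u D : F) : u * u = 1 -> D != 0 ->
  u * X / D ^+ 2 = u * B / D -> X = D * B.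
Proof.
move=> hu hD h; have hu0 := unit_sq hu.
have := congr1 (fun y => y * (u * D ^+ 2)) h => /=.
have -> : u * X / D ^+ 2 * (u * D ^+ 2) = (u * u) * X by field; rewrite ?hD ?hu0.
have -> : u * B / D * (u * D ^+ 2) = (u * u) * (D * B) by field; rewrite ?hD ?hu0.
by rewrite hu !mul1r.
Qed.

Lemma alt_mul2 n (a b : 'I_n -> int) :
  alt a * alt b =
  \sum_(p : 'S_n * 'S_n) ((sgn p.1 * sgn p.2)%:~R *
     mono [ffun k => a ((p.1^-1)%g k) + b ((p.2^-1)%g k) + 0]).
Proof. have := alt_mul3 a b (fun _ => 0); rewrite mono0 mulr1 => ->; by []. Qed.

Lemma ring1 (F : fieldType) (x u s A E : F) :
  x * (u * s * A / E) = u * (s * x * A) / E.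
Proof. by ring. Qed.

Lemma ring2 (F : fieldType) (c u a E : F) :
  c * (u * a / E) = u * (c * a) / E.
Proof. by ring. Qed.

Lemma ring3 (F : fieldType) (a D b p : F) :
  a * (D * b * p) = D * (a * b * p).
Proof. by ring. Qed.

Unset Implicit Arguments.

Theorem lemma3p6 (n : nat) (la : {ffun 'I_n -> int}) :
  strict_decr la ->
  forall (S : seq {ffun 'I_n -> int}) (g : {ffun 'I_n -> int} -> int),
    uniq S ->
    (forall mu, mu \in S -> gen_partition mu) ->
    (forall mu, mu \notin S -> g mu = 0) ->
    schurP la = \sum_(mu <- S) (g mu)%:~R * schurL mu ->
    g (zero_part n) = (if la == two_rho n then 1 else 0).
Proof.
move=> hla S g hS hgp hg0 H.
set D := alt (fun i : 'I_n => 1 * (i : nat)%:Z).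
set A2 := alt (fun i : 'I_n => 2 * (i : nat)%:Z).
set u := cst n.
have hu : u * u = 1 := cst_sq n.
have hsq : forall w : 'S_n, (sgn w)%:~R * (sgn w)%:~R = 1 :> ratfun n.
  by move=> w; apply: sgn_sq.
have hV1 : wvandermonde (1%g : 'S_n) != 0.
  apply/prodf_neq0 => i _; apply/prodf_neq0 => j hij; rewrite !perm1.
  by apply: xvarB_neq0; rewrite -(inj_eq val_inj) /= ltn_eqF.
have hD : D != 0.
  by apply/eqP => h0; move: hV1; rewrite wvdmE -/D h0 !mulr0 eqxx.
have HP : schurP la = u * (alt la * A2) / D ^+ 2.
  rewrite /schurP [alt la]/alt mulr_suml mulr_sumr mulr_suml; apply: eq_bigr => w _.
  rewrite (alg1 hu (hsq w) hD (wplusE w) (wvdmE w)).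
  exact: ring1.
have HL : forall mu, schurL mu = u * alt (fun i => mu i + (n - 1 - i)%N%:Z) / D.
  move=> mu; rewrite /schurL /alt mulr_sumr mulr_suml; apply: eq_bigr => w _.
  by rewrite wvdmE -/D (alg2 _ hu (hsq w) hD) mulrA.
set B := \sum_(mu <- S) (g mu)%:~R * alt (fun i => mu i + (n - 1 - i)%N%:Z).
have HX : alt la * A2 = D * B.
  apply: (alg3 hu hD); rewrite -HP H /B mulr_sumr mulr_suml; apply: eq_bigr => mu _.
  by rewrite HL; exact: ring2.
pose E1 (p : 'S_n * 'S_n) := [ffun k => la ((p.1^-1)%g k) + (-2 * ((p.2^-1)%g k : nat)%:Z) + (n.-1)%:Z].
pose E2 (mu : {ffun 'I_n -> int}) (p : 'S_n * 'S_n) := [ffun k => mu ((p.1^-1)%g k) + (n - 1 - (p.1^-1)%g k)%N%:Z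
      + (-1 * ((p.2^-1)%g k : nat)%:Z) + 0].
have HY : alt la * alt (fun i : 'I_n => -2 * (i : nat)%:Z) * mono (fun _ : 'I_n => (n.-1)%:Z) =
          B * alt (fun i : 'I_n => -1 * (i : nat)%:Z).
  apply: (mulfI hD).
  have := congr1 (fun y => y * alt (fun i : 'I_n => -1 * (i : nat)%:Z)) HX => /=.
  move=> h; rewrite -mulrA /A2 key_id -/D ring3 -[D * B * _]mulrA in h.
  exact: h.
have HZ : \sum_(i <- [:: tt]) \sum_(p : 'S_n * 'S_n)
     (((fun (_ : unit) (p : 'S_n * 'S_n) => sgn p.1 * sgn p.2) i p)%:~R *
        mono ((fun (_ : unit) p => E1 p) i p)) =
   \sum_(mu <- S) \sum_(p : 'S_n * 'S_n) ((g mu * (sgn p.1 * sgn p.2))%:~R * mono (E2 mu p)).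
  rewrite big_seq1.
  transitivity (alt la * alt (fun i : 'I_n => -2 * (i : nat)%:Z) * mono (fun _ : 'I_n => (n.-1)%:Z)).
    by rewrite alt_mul3.
  rewrite HY /B mulr_suml; apply: eq_bigr => mu _.
  rewrite -mulrA alt_mul2 mulr_sumr; apply: eq_bigr => p _.
  by rewrite [in RHS]intrM mulrA.
have hCE := CE (zero_part n) HZ.
set T := sgn (rv n) *+ #|{: 'S_n}|.
have hT : T != 0.
  rewrite /T mulrn_eq0 negb_or; apply/andP; split.
    by rewrite -lt0n; apply/card_gt0P; exists 1%g.
  by rewrite /sgn signr_eq0.
rewrite big_seq1 in hCE.
rewrite (eq_bigl (fun p : 'S_n * 'S_n => (la == two_rho n) && ((p.1 * (p.2^-1))%g == rv n))) in hCE;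
  last by move=> p; exact: E1char.
rewrite big_seq in hCE.
rewrite (eq_bigr (fun mu => if mu == zero_part n then g mu * T else 0)) in hCE; last first.
  move=> mu hmu.
  rewrite (eq_bigl (fun p : 'S_n * 'S_n => (mu == zero_part n) && ((p.1 * (p.2^-1))%g == rv n)));
    last by move=> p; exact: E2char (hgp mu hmu).
  case: (mu == zero_part n) => /=; last by rewrite big_pred0.
  by rewrite -mulr_sumr Tval.
rewrite -big_seq sum_pick // in hCE.
move: hCE; case: (la == two_rho n) => /=; rewrite ?Tval ?big_pred0 //.
- case: ifP => h0.
  + by rewrite -[X in X = _]mul1r => /mulIf -> //.
  + by move=> /eqP; rewrite (negbTE hT).
- case: ifP => h0.
  + by move=> /esym /eqP; rewrite mulf_eq0 (negbTE hT) orbF => /eqP.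
  + by move=> _; apply: hg0; rewrite h0.
Qed.
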